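(* Let $1\le q<p$ and suppose a subspace $X\subseteq\mathbb{R}^n$ is $(2k,\varepsilon)$-$\ell_p$-spread. Then $X$ is $(k,\varepsilon_q)$-$\ell_q$-spread for $\varepsilon_q=\varepsilon^2\left(\frac{k}{n}\right)^{1/q}$. In particular, if $X$ is $(\Omega(n),\Omega(1))$-$\ell_p$-spread, then $X$ is also $(\Omega(n),\Omega(1))$-$\ell_q$-spread for every $1\le q<p$.
   Context: A vector $y\in\mathbb{R}^n$ is $k$-sparse if $|\mathrm{supp}(y)|\le k$. A nonzero $x\in\mathbb{R}^n$ is $(k,\varepsilon)$-$\ell_p$-compressible if some $k$-sparse $y$ has $\|x-y\|_p\le\varepsilon\|x\|_p$, and $(k,\varepsilon)$-$\ell_p$-spread otherwise. A subspace $X$ is $(k,\varepsilon)$-$\ell_p$-spread if every nonzero $x\in X$ is $(k,\varepsilon)$-$\ell_p$-spread. *)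

(* Defs.v *)
From HB Require Import structures.
From mathcomp Require Import all_boot all_order all_algebra.
From mathcomp Require Import reals exp.
Set Implicit Arguments.
Unset Strict Implicit.
Unset Printing Implicit Defensive.
Import Order.TTheory GRing.Theory Num.Theory.
Local Open Scope ring_scope.

Section Spread.
Variables (R : realType) (n : nat).

Definition supp (y : 'rV[R]_n) : {set 'I_n} := [set i | y ord0 i != 0].

Definition ksparse (k : nat) (y : 'rV[R]_n) : bool := (#|supp y| <= k)%N.

Definition lpnorm (p : R) (x : 'rV[R]_n) : R :=
  (\sum_(i < n) `|x ord0 i| `^ p) `^ p^-1.

Definition compressible (p : R) (k : nat) (eps : R) (x : 'rV[R]_n) : Prop :=
  exists y : 'rV[R]_n, ksparse k y /\ lpnorm p (x - y) <= eps * lpnorm p x.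

Definition spread (p : R) (k : nat) (eps : R) (x : 'rV[R]_n) : Prop :=
  x != 0 /\ ~ compressible p k eps x.

Definition subspace_spread (p : R) (k : nat) (eps : R)
  (X : {vspace 'rV[R]_n}) : Prop :=
  forall x : 'rV[R]_n, x \in X -> x != 0 -> spread p k eps x.

End Spread.

(* Main.v *)
Require Import Defs.
From HB Require Import structures.
From mathcomp Require Import all_boot all_order all_algebra.
From mathcomp Require Import reals exp.
From mathcomp Require Import ring lra zify.
Import Order.TTheory GRing.Theory Num.Theory.
Local Open Scope ring_scope.


Section H.
Variable R : realType.

Lemma tangent (u m r : R) : 0 <= u -> 0 <= m -> 1 < r ->
  u * m `^ (r - 1) <= u `^ r / r + m `^ r * (1 - r^-1).
Proof.
move=> u0 m0 r1.
have r0 : 0 < r by lra.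
have r10 : 0 < r - 1 by lra.
have s0 : 0 < r / (r - 1) by rewrite divr_gt0.
have := @conjugate_powR R u (m `^ (r - 1)) r (r / (r - 1)) u0 (powR_ge0 _ _) r0 s0.
have conj : r^-1 + (r / (r - 1))^-1 = 1.
  by rewrite invf_div mulrBl divff ?gt_eqF // mul1r addrC subrK.
move=> /(_ conj).
rewrite -powRrM mulrCA divff ?gt_eqF // mulr1 invf_div.
have -> : (r - 1) / r = 1 - r^-1.
  by rewrite mulrBl divff ?gt_eqF // mul1r.
by [].
Qed.

Lemma power_mean n (u : 'I_n -> R) (r : R) : (forall i, 0 <= u i) -> 1 < r ->
  n%:R * ((\sum_i u i) / n%:R) `^ r <= \sum_i u i `^ r.
Proof.
move=> u0 r1.
have r0 : 0 < r by lra.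
case: n u u0 => [|n] u u0.
  by rewrite mul0r big_ord0.
set m := (\sum_i u i) / n.+1%:R.
have m0 : 0 <= m by rewrite divr_ge0 // sumr_ge0.
have H : \sum_i u i * m `^ (r - 1) <= \sum_i (u i `^ r / r + m `^ r * (1 - r^-1)).
  by apply: ler_sum => i _; apply: tangent.
rewrite -mulr_suml big_split /= -mulr_suml sumr_const card_ord in H.
have Hs : \sum_i u i = n.+1%:R * m by rewrite /m mulrC divfK // pnatr_eq0.
rewrite Hs -mulrA (mulr_powRB1 m0 r0) in H.
set a := n.+1%:R * m `^ r in H *.
set P := \sum_i u i `^ r in H *.
have ri : 0 < r^-1 by rewrite invr_gt0.
have : a * r^-1 <= P * r^-1.
  have E : m `^ r * (1 - r^-1) *+ n.+1 = a - a / r by rewrite /a -mulr_natr; ring.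
  rewrite E in H; lra.
by rewrite ler_pM2r.
Qed.

End H.


Lemma top_subset (R : realType) n (f : 'I_n -> R) (A : {set 'I_n}) m :
  (m <= #|A|)%N -> exists U : {set 'I_n}, [/\ U \subset A, #|U| = m &
    forall i j, i \in U -> j \in A :\: U -> f j <= f i].
Proof.
elim: m => [|m IH] Hm.
  by exists set0; split => //; [exact: sub0set | rewrite cards0 | move=> i j; rewrite inE].
have [U [sUA cU HU]] := IH (ltnW Hm).
have : (0 < #|A :\: U|)%N by rewrite cardsD (setIidPr sUA) cU subn_gt0.
move=> /card_gt0P [j0 Hj0].
case: (@arg_maxP _ R _ j0 (mem (A :\: U)) f Hj0) => j Hj Hmax.
exists (j |: U); split.
- move: Hj => /setDP [jA jU].
  by rewrite subUset sub1set sUA andbT.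
- move: Hj => /setDP [jA jU].
  by rewrite cardsU1 cU (negbTE jU).
- move=> i j'; rewrite in_setU1 => /orP[/eqP -> | iU].
  + rewrite !inE negb_or => /andP[/andP[_ j'U] j'A].
    have Hj' : j' \in A :\: U by rewrite !inE j'U j'A.
    exact: (Hmax j' Hj').
  + rewrite !inE negb_or => /andP[/andP[_ j'U] j'A].
    by apply: HU; rewrite // !inE j'U j'A.
Qed.


Lemma sum_sub_le (R : realType) n (F : 'I_n -> R) (A B : {set 'I_n}) :
  (forall i, 0 <= F i) -> A \subset B -> \sum_(i in A) F i <= \sum_(i in B) F i.
Proof.
move=> F0 sAB; rewrite (big_setID A (A:=B)) (setIidPr sAB) lerDl.
by apply: sumr_ge0.
Qed.

Lemma main (R : realType) n k (p q eps : R) (x y : 'rV[R]_n) :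
  1 <= q -> q < p -> 0 <= eps -> eps <= 1 ->
  ksparse k y ->
  lpnorm q (x - y) <= eps ^+ 2 * (k%:R / n%:R) `^ q^-1 * lpnorm q x ->
  compressible p (2 * k) eps x.
Proof.
move=> q1 qp e0 e1 ys Hy.
have q0 : 0 < q by apply: lt_le_trans q1.
have p0 : 0 < p by apply: lt_trans qp.
set S := supp y.
have yS : forall i, i \notin S -> y ord0 i = 0.
  by move=> i; rewrite /S /supp inE negbK => /eqP.
have cS : (#|S| <= k)%N := ys.
have lp0 : forall r (z : 'rV[R]_n), 0 <= lpnorm r z by move=> r z; apply: powR_ge0.
case: (leqP #|~:S| k) => HSc.
exists x; split.
rewrite /ksparse; apply: leq_trans (max_card _) _.
apply: (@leq_trans (#|S| + #|~:S|)); first by rewrite cardsC.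
by rewrite mul2n -addnn leq_add.
rewrite subrr /lpnorm big1 => [|i _]; last by rewrite mxE normr0 powR0 ?gt_eqF.
  rewrite powR0; first exact: mulr_ge0 e0 (powR_ge0 _ _).
  by rewrite invr_eq0 gt_eqF.
have [U [sU cU HU]] := @top_subset R _ (fun i => `|x ord0 i|) _ _ (ltnW HSc).
set T := S :|: U.
exists (\row_i (if i \in T then x ord0 i else 0)); split.
  rewrite /ksparse; apply: (@leq_trans #|T|).
    apply: subset_leq_card; apply/subsetP => i.
    by rewrite /supp inE mxE; case: ifP => //; rewrite eqxx.
  apply: leq_trans (leq_card_setU S U).1 _.
  by rewrite cU mul2n -addnn leq_add.
set r := p / q.
have r1 : 1 < r by rewrite /r ltr_pdivlMr // mul1r.
have r0 : 0 < r by apply: lt_trans r1.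
set u := fun i => `|x ord0 i| `^ q.
have u0 : forall i, 0 <= u i by move=> i; apply: powR_ge0.
have hu : forall i, u i `^ r = `|x ord0 i| `^ p.
  by move=> i; rewrite /u -powRrM /r mulrC divfK // gt_eqF.
set Q := \sum_i u i.
set m0 := Q / n%:R.
set D := \sum_(i in ~:S) u i.
set e := eps ^+ 2.
have e0' : 0 <= e by rewrite /e sqr_ge0.
have ee : e <= eps by rewrite /e expr2; have := ler_wpM2r e0 e1; rewrite mul1r.
set s := e `^ q.
have s0 : 0 <= s by apply: powR_ge0.
have Q0 : 0 <= Q by apply: sumr_ge0.
have m00 : 0 <= m0 by rewrite /m0 divr_ge0.
have HD : D <= s * k%:R * m0.
  set E := \sum_i `|(x - y) ord0 i| `^ q.
  have E0 : 0 <= E by apply: sumr_ge0 => i _; apply: powR_ge0.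
  have HDE : D <= E.
    have -> : D = \sum_(i in ~:S) `|(x - y) ord0 i| `^ q.
      apply: eq_bigr => i iS; rewrite /u !mxE yS ?subr0 //.
      by move: iS; rewrite inE.
    have := @sum_sub_le R n (fun i => `|(x - y) ord0 i| `^ q) (~: S) setT
      (fun i => powR_ge0 _ _) (subsetT _).
    move=> h; apply: (le_trans h); rewrite le_eqVlt; apply/orP; left; apply/eqP; apply: eq_bigl => i.
    exact: in_setT.
  have Hy' : E `^ q^-1 <= e * (k%:R / n%:R) `^ q^-1 * Q `^ q^-1 := Hy.
  have kn0 : 0 <= k%:R / n%:R :> R by rewrite divr_ge0.
  have := ge0_ler_powR (ltW q0) _ _ Hy'.
  rewrite -powRrM mulVf ?gt_eqF // powRr1 //.
  rewrite powRM ?mulr_ge0 ?powR_ge0 // powRM ?powR_ge0 //.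
  rewrite -!powRrM mulVf ?gt_eqF // !powRr1 //.
  have H1 : E `^ q^-1 \is Num.nneg by rewrite nnegrE powR_ge0.
  have H2 : e * (k%:R / n%:R) `^ q^-1 * Q `^ q^-1 \is Num.nneg.
    by rewrite nnegrE !mulr_ge0 ?powR_ge0.
  move=> /(_ H1 H2) HE.
  apply: le_trans HDE (le_trans HE _).
  by rewrite /s /m0 le_eqVlt; apply/orP; left; apply/eqP; ring.
have nn : forall a : R, 0 <= a -> a \is Num.nneg by move=> a; rewrite nnegrE.
set m := (\sum_(i in U) u i) / k%:R.
have m0' : 0 <= m by rewrite /m divr_ge0 // sumr_ge0.
have Hsplit : D = \sum_(i in U) u i + \sum_(i in ~:S :\: U) u i.
  by rewrite /D (big_setID U) (setIidPr sU).
have sumU : \sum_(i in U) u i <= D by rewrite Hsplit lerDl sumr_ge0.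
have sumV : \sum_(i in ~:S :\: U) u i <= D by rewrite Hsplit lerDr sumr_ge0.
have Hm : forall j, j \in ~:S :\: U -> u j <= m.
  move=> j hj.
  case: (posnP k) => [k0|kpos].
    have : D <= 0 by rewrite (le_trans HD) // k0 mulr0 mul0r.
    rewrite /m k0 invr0 mulr0 => HD0.
    apply: le_trans HD0.
    apply: le_trans sumV.
    by rewrite (bigD1 j) //= lerDl sumr_ge0.
  rewrite /m ler_pdivlMr ?ltr0n //.
  rewrite -cU mulr_natr -sumr_const.
  apply: ler_sum => i iU; rewrite /u.
  exact: (ge0_ler_powR (ltW q0) (nn _ (normr_ge0 _)) (nn _ (normr_ge0 _)) (HU i j iU hj)).
have Hms : m <= s * m0.
  case: (posnP k) => [k0|kpos].
    by rewrite /m k0 invr0 mulr0 mulr_ge0.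
  rewrite /m ler_pdivrMr ?ltr0n //.
  apply: le_trans sumU (le_trans HD _).
  by rewrite le_eqVlt; apply/orP; left; apply/eqP; ring.
have D0 : 0 <= D by apply: sumr_ge0.
have r10 : 0 <= r - 1 by rewrite subr_ge0 ltW.
have HB : \sum_(j in ~:S :\: U) `|x ord0 j| `^ p <= m `^ (r - 1) * D.
  apply: le_trans (_ : \sum_(j in ~:S :\: U) u j * m `^ (r-1) <= _).
    apply: ler_sum => j hj.
    rewrite -hu -(mulr_powRB1 (u0 j) r0).
    apply: (ler_wpM2l (u0 j)).
    exact: (ge0_ler_powR r10 (nn _ (u0 j)) (nn _ m0') (Hm j hj)).
  rewrite -mulr_suml mulrC.
  exact: (ler_wpM2l (powR_ge0 _ _) sumV).
have HB2 : m `^ (r - 1) * D <= k%:R * (s `^ r * m0 `^ r).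
  apply: le_trans (_ : (s * m0) `^ (r - 1) * (s * k%:R * m0) <= _).
    apply: ler_pM (powR_ge0 _ _) D0 _ HD.
    exact: (ge0_ler_powR r10 (nn _ m0') (nn _ (mulr_ge0 s0 m00)) Hms).
  have -> : (s * m0) `^ (r - 1) * (s * k%:R * m0) = k%:R * ((s * m0) * (s * m0) `^ (r - 1)) by ring.
  by rewrite (mulr_powRB1 (mulr_ge0 s0 m00) r0) (powRM r s0 m00).
set P := \sum_i `|x ord0 i| `^ p.
have PM : n%:R * m0 `^ r <= P.
  have := @power_mean R n u r u0 r1.
  move=> h; apply: le_trans h _; rewrite le_eqVlt; apply/orP; left; apply/eqP.
  by apply: eq_bigr => i _; rewrite hu.
have kn : (k <= n)%N.
  apply: leq_trans (ltnW HSc) _.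
  by have := max_card (~: S); rewrite card_ord.
have HB3 : k%:R * (s `^ r * m0 `^ r) <= s `^ r * P.
  rewrite mulrCA; apply: (ler_wpM2l (powR_ge0 _ _)).
  apply: le_trans PM.
  by apply: (ler_wpM2r (powR_ge0 _ _)); rewrite ler_nat.
have sr : s `^ r = e `^ p by rewrite /s -powRrM /r mulrC divfK // gt_eqF.
have ep : e `^ p <= eps `^ p.
  exact: (ge0_ler_powR (ltW p0) (nn _ e0') (nn _ e0) ee).
have HF : \sum_(j in ~:S :\: U) `|x ord0 j| `^ p <= eps `^ p * P.
  apply: le_trans HB (le_trans HB2 (le_trans HB3 _)).
  rewrite sr; apply: (ler_wpM2r _ ep).
  by apply: sumr_ge0 => i _; apply: powR_ge0.
rewrite /lpnorm.
have -> : \sum_i `|(x - \row_i0 (if i0 \in T then x ord0 i0 else 0)) ord0 i| `^ p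
    = \sum_(j in ~:S :\: U) `|x ord0 j| `^ p.
  rewrite (bigID (fun i => i \in T)) /= big1 ?add0r.
    apply: eq_big => [i|i hi].
      by rewrite /T !inE negb_or andbC.
    by rewrite !mxE (negbTE hi) subr0.
  by move=> i hi; rewrite !mxE hi subrr normr0 powR0 // gt_eqF.
have P0 : 0 <= P by apply: sumr_ge0 => i _; apply: powR_ge0.
apply: le_trans (_ : (eps `^ p * P) `^ p^-1 <= _).
  have pi0 : 0 <= p^-1 by rewrite invr_ge0 ltW.
  have n1 : \sum_(j in ~:S :\: U) `|x ord0 j| `^ p \is Num.nneg.
    by apply: nn; apply: sumr_ge0 => i _; apply: powR_ge0.
  exact: (ge0_ler_powR pi0 n1 (nn _ (mulr_ge0 (powR_ge0 _ _) P0)) HF).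
rewrite (powRM p^-1 (powR_ge0 eps p) P0) -powRrM (mulfV (negbT (gt_eqF p0))) (powRr1 e0).
exact: lexx.
Qed.

Theorem proposition3p7 (R : realType) (n k : nat) (p q eps : R)
  (X : {vspace 'rV[R]_n}) :
  1 <= q -> q < p -> 0 <= eps ->
  subspace_spread p (2 * k)%N eps X ->
  subspace_spread q k (eps ^+ 2 * (k%:R / n%:R) `^ q^-1) X.
Proof.
move=> q1 qp e0 Hsp x xX x0; split => //.
move=> [y [ys Hy]].
have [_ Hnc] := Hsp x xX x0.
apply: Hnc.
case: (lerP eps 1) => e1.
  exact: main q1 qp e0 e1 ys Hy.
exists 0; split.
  rewrite /ksparse.
  have -> : supp (0 : 'rV[R]_n) = set0 by apply/setP => i; rewrite !inE mxE eqxx.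
  by rewrite cards0.
rewrite subr0 -{1}(mul1r (lpnorm p x)).
exact: (ler_wpM2r (powR_ge0 _ _) (ltW e1)).
Qed.
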